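(* Suppose $F_L$ is supported on $[0,\bar L)$ and $F_H$ is supported on $[\underline H,\infty)$, with $\bar L<\underline H$. Suppose $\alpha_i=1$ for at least two agents $i$. Let $r_L<r_H$. Then for every $\rho\in(\bar L,\underline H)$, the threshold mechanism ${\cal M}(\rho,r_L,r_H)$ is incentive compatible. That is, for each agent $i$, each type $s$ and each $v_i$ in the support of $F_s$, the truthful strategy of agent $i$ is a best response when all other agents bid truthfully.
   Context: Setting: a seller sells $T>1$ items, one per round $t=1,\dots,T$, to $n$ agents. All items share a type $s\in\{L,H\}$, which has prior probabilities $p_L,p_H$. The type $s$ is known to the agents but not to the seller. Conditional on $s$, agent $i$'s valuation $v_i$ is drawn independently from $F_s$ and is the same in all rounds. In each round, agent $i$ participates independently with probability $\alpha_i$ and learns this at the start of the round. $T$, $p_L$, $p_H$ and the $\alpha_i$ are common knowledge. Each agent knows only its own valuation. Each round runs a second price auction with reserve $r_t$ among the participants: if all bids are below $r_t$ there is no sale; otherwise a highest bidder (ties broken uniformly at random) wins and pays the maximum of $r_t$ and the highest other bid. A bidding strategy for agent $i$ maps $v_i$, the agent's own observed history (past reserves, own participation, bids, allocations, payments) and the current reserve to a bid. Agent $i$'s utility is $\mathbb{E}[\sum_t (v_iq_{it}-p_{it})]$. The truthful strategy bids $v_i$ whenever participating. A best response maximizes this utility given the others' strategies. The threshold mechanism ${\cal M}(\rho,r_L,r_H)$ works as follows. The reserve is $r_L$ in round 1 and stays $r_L$ until some agent bids above $\rho$ in some round. In all rounds after that, the reserve is $r_H$. If no bid ever exceeds $\rho$,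 the reserve stays $r_L$ until round $T$. *)

(* Defs.v *)
From HB Require Import structures.
From mathcomp Require Import all_boot all_order all_algebra all_fingroup.
From mathcomp Require Import all_classical all_reals all_analysis.
Set Implicit Arguments. Unset Strict Implicit. Unset Printing Implicit Defensive.
Import Order.TTheory GRing.Theory Num.Theory.
Import numFieldNormedType.Exports.
Local Open Scope classical_set_scope.
Local Open Scope ring_scope.

Inductive item_type := TL | TH.

Section Model.
Variable R : realType.
Variable n : nat.

Record obs := Obs {
  obs_reserve : R; obs_part : bool; obs_bid : option R;
  obs_alloc : bool; obs_pay : R }.

(* A bidding strategy of an agent: own valuation -> own observed history
   (past rounds, oldest first) -> current reserve -> bid.
   It is only consulted in rounds in which the agent participates. *)
Definition strategy := R -> seq obs -> R -> R.

Definition truthful : strategy := fun v _ _ => v.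

(* Bids of a round: None = agent does not participate. *)
Definition bids := 'I_n -> option R.

(* Second-price auction with reserve r; ties among the highest bidders are
   broken by the uniformly random priority permutation pi (lowest pi wins),
   which selects a uniformly random highest bidder. *)
Definition is_winner (r : R) (b : bids) (pi : {perm 'I_n}) (w : 'I_n) : bool :=
  match b w with
  | Some x => (r <= x) &&
      [forall j, match b j with
                 | Some y => (y < x) || ((y == x) && (pi w <= pi j)%N)
                 | None => true end]
  | None => false
  end.

Definition winner (r : R) (b : bids) (pi : {perm 'I_n}) : option 'I_n :=
  [pick w | is_winner r b pi w].

Definition payment (r : R) (b : bids) (w : 'I_n) : R :=
  \big[Num.max/r]_(j | j != w) (match b j with Some y => y | None => r end).

Definition exceeds (rho : R) (b : bids) : bool :=
  [exists j, match b j with Some y => rho < y | None => false end].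

(* Play of the threshold mechanism M(rho, rL, rH), where agent i uses
   strategy sigma and all other agents bid truthfully.
   part t j : does agent j participate in round t;  tie t : tie-breaking
   permutation of round t;  v : valuations.
   Returns (threshold already exceeded, history of agent i, utility of i). *)
Fixpoint play (rho rL rH : R) (i : 'I_n) (sigma : strategy) (v : 'I_n -> R)
  (part : nat -> 'I_n -> bool) (tie : nat -> {perm 'I_n}) (k : nat)
  : bool * seq obs * R :=
  match k with
  | 0 => (false, [::], 0)
  | k'.+1 =>
    let: (trig, h, u) := play rho rL rH i sigma v part tie k' in
    let r := if trig then rH else rL in
    let b : bids := fun j => if part k' j then
                     Some (if j == i then sigma (v i) h r else v j) else None in
    let q := winner r b (tie k') == Some i in
    let p := if q then payment r b i else 0 in
    (trig || exceeds rho b, rcons h (Obs r (part k' i) (b i) q p),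
     u + (if q then v i else 0) - p)
  end.

Definition ffun_nat (T : nat) (A : Type) (d : A) (f : {ffun 'I_T -> A}) : nat -> A :=
  fun t => if @insub nat (fun k => (k < T)%N) 'I_T t is Some t' then f t' else d.

(* Expected utility of agent i over participation (agent j participates in
   each round independently with prob. alpha j) and uniform tie-breaking,
   for fixed valuations v. *)
Definition exp_util_fin (T : nat) (alpha : 'I_n -> R) (rho rL rH : R)
  (i : 'I_n) (sigma : strategy) (v : 'I_n -> R) : R :=
  \sum_(a : {ffun 'I_T -> {ffun 'I_n -> bool}})
   \sum_(pi : {ffun 'I_T -> {perm 'I_n}})
     (\prod_(t < T) \prod_(j < n) (if a t j then alpha j else 1 - alpha j))
     * (#|{ffun 'I_T -> {perm 'I_n}}|%:R)^-1
     * (play rho rL rH i sigma v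
          (fun t j => ffun_nat [ffun=> false] a t j)
          (ffun_nat 1%g pi) T).2.

(* Iterated integral: integrates out the coordinates js of v, each w.r.t. mu
   (i.e. the expectation over independent mu-distributed coordinates). *)
Fixpoint iter_int (mu : {measure set R -> \bar R}) (js : seq 'I_n)
  (f : ('I_n -> R) -> \bar R) (v : 'I_n -> R) : \bar R :=
  match js with
  | [::] => f v
  | j :: js' => (\int[mu]_x iter_int mu js' f (fun k => if k == j then x else v k))%E
  end.

(* Interim expected utility of agent i with valuation vi when the others'
   valuations are i.i.d. with distribution mu and bid truthfully. *)
Definition exp_util (T : nat) (alpha : 'I_n -> R) (mu : {measure set R -> \bar R})
  (rho rL rH : R) (i : 'I_n) (vi : R) (sigma : strategy) : \bar R :=
  iter_int mu [seq j <- enum 'I_n | j != i]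
    (fun v => (exp_util_fin T alpha rho rL rH i sigma v)%:E) (fun=> vi).

End Model.

Definition msupport (R : realType) (mu : {measure set R -> \bar R}) : set R :=
  [set x | forall e : R, 0 < e -> (0 < mu (ball x e))%E].

(* Main.v *)
Require Import Defs.
From HB Require Import structures.
From mathcomp Require Import all_boot all_order all_algebra all_fingroup.
From mathcomp Require Import all_classical all_reals all_analysis.
Import Order.TTheory GRing.Theory Num.Theory.
Import numFieldNormedType.Exports.
Local Open Scope classical_set_scope.
Local Open Scope ring_scope.
From mathcomp Require Import measurable_realfun.
Import HBNNSimple.

Lemma nn_le (R : realType) (mu : {measure set R -> \bar R}) (S : set R)
  (mS : measurable S) (muS : mu (~` S) = 0%E) (f g : R -> \bar R) :
  (forall x, 0 <= f x)%E -> (forall x, 0 <= g x)%E ->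
  (forall x, S x -> f x <= g x)%E -> (\int[mu]_x f x <= \int[mu]_x g x)%E.
Proof.
move=> f0 g0 fg; rewrite !ge0_integralTE//.
apply: ge_ereal_sup => _ [h /= hf <-].
pose h2 := proj_nnsfun h mS.
have -> : sintegral mu h = sintegral mu h2.
  rewrite -!integralT_nnsfun; apply: ae_eq_integral => //.
  - by apply/measurable_EFinP; exact: measurable_funP.
  - by apply/measurable_EFinP; exact: measurable_funP.
  - exists (~` S); split => //; first exact: measurableC.
    move=> x /= H; apply: contra_not H => Sx _.
    by rewrite /= mindicE mem_set// mulr1.
apply: ereal_sup_ubound; exists h2 => // x /=.
rewrite mindicE; case: (boolP (x \in S)) => [/set_mem Sx|_].
  by rewrite mulr1; apply: le_trans (hf x) (fg x Sx).
by rewrite mulr0.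
Qed.

Lemma ae_le (R : realType) (mu : {measure set R -> \bar R}) (S : set R)
  (mS : measurable S) (muS : mu (~` S) = 0%E) (f g : R -> \bar R) :
  (forall x, S x -> f x <= g x)%E -> (\int[mu]_x f x <= \int[mu]_x g x)%E.
Proof.
move=> fg; rewrite integralE [leRHS]integralE; apply: leeB.
  apply: (@nn_le _ mu S mS muS); try by move=> x; exact: funepos_ge0.
  by move=> x Sx; rewrite !funeposE; apply: le_max2 => //; exact: fg.
apply: (@nn_le _ mu S mS muS); try by move=> x; exact: funeneg_ge0.
by move=> x Sx; rewrite !funenegE; apply: le_max2 => //; rewrite leeN2; exact: fg.
Qed.
Section Auction.
Variables (R : realType) (n : nat) (i : 'I_n).

Definition bidval (r : R) (o : option R) := if o is Some y then y else r.

Lemma payment_ge_r r (b : bids R n) : r <= payment r b i.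
Proof.
rewrite /payment; apply: (big_rec (fun x => r <= x)) => // j x _ hx.
by rewrite le_max hx orbT.
Qed.

Lemma payment_ge_bid r (b : bids R n) j y : j != i -> b j = Some y ->
  y <= payment r b i.
Proof.
move=> ji bj; rewrite /payment (bigD1 j) //= bj.
by rewrite le_max lexx.
Qed.

Lemma payment_le r (b : bids R n) M : r <= M ->
  (forall j y, j != i -> b j = Some y -> y <= M) -> payment r b i <= M.
Proof.
move=> rM hb; rewrite /payment; elim/big_ind: _ => //.
  by move=> x y hx hy; rewrite ge_max hx.
move=> j ji; case E: (b j) => [y|] //; exact: hb E.
Qed.

Lemma payment_mono r1 r2 (b1 b2 : bids R n) : r1 <= r2 ->
  (forall j, j != i -> b1 j = b2 j) -> payment r1 b1 i <= payment r2 b2 i.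
Proof.
move=> r12 hb; rewrite /payment; elim/big_ind2: _ => //.
  by move=> x1 x2 y1 y2 h1 h2; exact: le_max2.
by move=> j ji; rewrite hb //; case: (b2 j).
Qed.

Lemma winnerP r (b : bids R n) pi w : winner r b pi = Some w -> is_winner r b pi w.
Proof. by rewrite /winner; case: pickP => // x hx [<-]. Qed.

Lemma winner_none r (b : bids R n) pi : b i = None -> winner r b pi != Some i.
Proof.
move=> bi; apply/negP => /eqP /winnerP; by rewrite /is_winner bi.
Qed.

Definition rutil r (b : bids R n) pi (vi : R) :=
  (if winner r b pi == Some i then vi else 0) -
  (if winner r b pi == Some i then payment r b i else 0).

Lemma rutil_le_max r b pi vi : rutil r b pi vi <= Num.max 0 (vi - payment r b i).
Proof.
rewrite /rutil; case: ifP => _; rewrite le_max ?lexx ?orbT //.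
by rewrite subrr lexx.
Qed.

Lemma rutil_truth r (b : bids R n) pi vi : b i = Some vi ->
  Num.max 0 (vi - payment r b i) <= rutil r b pi vi.
Proof.
move=> bi; rewrite /rutil; case: ifP => [/eqP/winnerP|hw].
  rewrite /is_winner bi => /andP[rv /forallP hall].
  have hP : payment r b i <= vi.
    apply: payment_le => // j y ji bj; move: (hall j); rewrite bj.
    by case/orP => [/ltW //| /andP[/eqP -> _]].
  by rewrite ge_max lexx subr_ge0 hP.
rewrite subrr ge_max lexx /= subr_le0.
rewrite leNgt; apply/negP => hlt.
have hwi : is_winner r b pi i.
  rewrite /is_winner bi (ltW (le_lt_trans (payment_ge_r r b) hlt)) /=.
  apply/forallP => j; case: (eqVneq j i) => [->|ji].
    by rewrite bi eqxx leqnn orbT.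
  case E: (b j) => [y|] //.
  by rewrite (le_lt_trans (payment_ge_bid r b j y ji E) hlt).
move: hw; rewrite /winner; case: pickP => [w hw|/(_ i)]; last by rewrite hwi.
case: (eqVneq w i) => [->|wi]; first by rewrite eqxx.
move: hw; rewrite /is_winner; case E: (b w) => [x|] // /andP[_ /forallP /(_ i)].
rewrite bi => h; exfalso.
have := le_lt_trans (payment_ge_bid r b w x wi E) hlt.
move: h => /orP[h|/andP[/eqP h _]].
  by move=> h'; have := lt_trans h h'; rewrite ltxx.
by rewrite h ltxx.
Qed.

Lemma round_le r1 r2 (b1 b2 : bids R n) pi vi (p : bool) x :
  r1 <= r2 -> (forall j, j != i -> b1 j = b2 j) ->
  b1 i = (if p then Some vi else None) -> b2 i = (if p then Some x else None) ->
  rutil r2 b2 pi vi <= rutil r1 b1 pi vi.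
Proof.
move=> r12 hb h1 h2; case: p h1 h2 => h1 h2.
  apply: (le_trans (rutil_le_max r2 b2 pi vi)).
  apply: (le_trans _ (rutil_truth r1 b1 pi vi h1)).
  apply: le_max2 => //; apply: lerB => //; exact: payment_mono.
by rewrite /rutil (negbTE (winner_none r1 b1 pi h1)) (negbTE (winner_none r2 b2 pi h2)) subrr.
Qed.

End Auction.

Section Play.
Variables (R : realType) (n : nat) (i : 'I_n) (rho rL rH : R) (v : 'I_n -> R)
  (part : nat -> 'I_n -> bool) (tie : nat -> {perm 'I_n}).

Lemma main_path (sigma : strategy R) : rL <= rH ->
  (forall k, (play rho rL rH i (@truthful R) v part tie k).1.1 ->
             (play rho rL rH i sigma v part tie k).1.1) ->
  forall k, (play rho rL rH i sigma v part tie k).2 <=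
            (play rho rL rH i (@truthful R) v part tie k).2.
Proof.
move=> hr htr; elim=> [|k IH] //=.
move: IH (htr k) => /=.
case: (play rho rL rH i sigma v part tie k) => [[tr1 h1] u1].
case: (play rho rL rH i (@truthful R) v part tie k) => [[tr2 h2] u2] /= IH Htr.
rewrite -!addrA; apply: lerD => //.
apply: (@round_le R n i _ _ _ _ _ _ (part k i) (sigma (v i) h1 (if tr1 then rH else rL))).
- by move: Htr; case: tr1; case: tr2 => // /(_ isT).
- by move=> j ji /=; rewrite (negbTE ji).
- by rewrite eqxx.
- by rewrite eqxx.
Qed.

Lemma play_trig (sigma : strategy R) k :
  (play rho rL rH i sigma v part tie k.+1).1.1 =
  (play rho rL rH i sigma v part tie k).1.1 ||
  exceeds rho (fun j => if part k j then Some (if j == i then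
     sigma (v i) (play rho rL rH i sigma v part tie k).1.2
       (if (play rho rL rH i sigma v part tie k).1.1 then rH else rL)
     else v j) else None).
Proof. by rewrite /=; case: play => [[tr h] u]. Qed.

Lemma trig_L : (forall j, v j < rho) ->
  forall k, ~~ (play rho rL rH i (@truthful R) v part tie k).1.1.
Proof.
move=> hv; elim=> // k IH; rewrite play_trig (negbTE IH) /=.
apply/existsPn => j; case: (part k j) => //.
by case: (j == i); rewrite /truthful -leNgt ltW.
Qed.

Lemma trig_H (sigma : strategy R) k0 : k0 != i -> part 0 k0 -> rho < v k0 ->
  forall k, (0 < k)%N -> (play rho rL rH i sigma v part tie k).1.1.
Proof.
move=> k0i hp hv; elim=> // k IH _; rewrite play_trig.
case: k IH => [|k] IH; last by rewrite IH.
apply/orP; right; apply/existsP; exists k0; by rewrite hp (negbTE k0i).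
Qed.

End Play.

Lemma fin_le (R : realType) (n T : nat) (alpha : 'I_n -> R) (rho rL rH : R)
  (i : 'I_n) (sigma : strategy R) (v : 'I_n -> R) :
  (0 < T)%N -> rL <= rH -> (forall j, 0 <= alpha j <= 1) ->
  ((forall j, v j < rho) \/ (exists k0, k0 != i /\ alpha k0 = 1 /\ rho < v k0)) ->
  exp_util_fin T alpha rho rL rH i sigma v <=
  exp_util_fin T alpha rho rL rH i (@truthful R) v.
Proof.
move=> T0 hr ha hcase; rewrite /exp_util_fin.
apply: ler_sum => a _; apply: ler_sum => pi _.
set w := \prod_(t < T) _.
have w0 : 0 <= w.
  apply: prodr_ge0 => t _; apply: prodr_ge0 => j _.
  by move: (ha j) => /andP[h0 h1]; case: ifP; rewrite ?subr_ge0.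
have c0 : 0 <= (#|{ffun 'I_T -> {perm 'I_n}}|%:R : R)^-1 by rewrite invr_ge0.
pose part : nat -> 'I_n -> bool := fun t j => ffun_nat [ffun=> false] a t j.
have key : (forall k, (play rho rL rH i (@truthful R) v part (ffun_nat 1%g pi) k).1.1 ->
             (play rho rL rH i sigma v part (ffun_nat 1%g pi) k).1.1) \/ w = 0.
  case: hcase => [hv|[k0 [k0i [a1 hv]]]].
    by left => k; rewrite (negbTE (@trig_L R n i rho rL rH v part _ hv k)).
  pose t0 : 'I_T := Ordinal T0.
  case E: (a t0 k0).
    left; case=> [|k] // _; apply: (@trig_H R n i rho rL rH v part _ sigma k0 k0i) => //.
    rewrite /part /ffun_nat; case: insubP => [t' _ ht'|]; last by rewrite T0.
    by have -> : t' = t0 by apply: val_inj.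
  by right; rewrite /w (bigD1 t0) //= (bigD1 k0) //= E a1 subrr !mul0r.
case: key => [h|->]; last by rewrite !mul0r.
apply: ler_wpM2l; first exact: mulr_ge0.
exact: main_path.
Qed.

Lemma iter_le (R : realType) (n : nat) (mu : {measure set R -> \bar R})
  (S : set R) (mS : measurable S) (muS : mu (~` S) = 0%E) (i : 'I_n) (vi : R)
  (f g : ('I_n -> R) -> \bar R) (js : seq 'I_n) :
  all (fun j => j != i) js ->
  (forall v, (forall k, if k == i then v k = vi else S (v k)) -> (f v <= g v)%E) ->
  forall v, (forall k, k \notin js -> if k == i then v k = vi else S (v k)) ->
  (iter_int mu js f v <= iter_int mu js g v)%E.
Proof.
move=> hall hfg; elim: js hall => [|j js IH] /=.
  by move=> _ v hv; apply: hfg => k; exact: hv.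
move=> /andP[ji hall] v hv; apply: (@ae_le _ mu S mS muS) => x Sx.
apply: IH => // k kn; case: (eqVneq k j) => [->|kj].
  by rewrite (negbTE ji).
by apply: hv; rewrite in_cons negb_or kj.
Qed.

Theorem proposition1 (R : realType) (n T : nat) (alpha : 'I_n -> R)
  (FL FH : probability R R) (Lbar Hund rL rH : R) :
  (1 < T)%N ->
  (forall j, 0 <= alpha j <= 1) ->
  (exists j k : 'I_n, j != k /\ alpha j = 1 /\ alpha k = 1) ->
  FL [set` `[0, Lbar[] = 1%E ->
  FH [set` `[Hund, +oo[] = 1%E ->
  Lbar < Hund ->
  rL < rH ->
  forall rho : R, Lbar < rho < Hund ->
  forall (s : item_type) (i : 'I_n) (vi : R),
    let F := if s is TL then FL else FH in
    msupport F vi ->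
    forall sigma : strategy R,
      (exp_util T alpha F rho rL rH i vi sigma
        <= exp_util T alpha F rho rL rH i vi (@truthful R))%E.
Proof.
move=> T1 ha [j1 [k1 [jk [a1 a2]]]] hFL hFH LH rLH rho /andP[Lr rH'] s i vi F hsupp sigma.
have T0 : (0 < T)%N by apply: ltn_trans T1.
have hall : all (fun j => j != i) [seq j <- enum 'I_n | j != i].
  by apply/allP => j; rewrite mem_filter => /andP[].
have hinit : forall k, k \notin [seq j <- enum 'I_n | j != i] -> k == i.
  by move=> k; rewrite mem_filter mem_enum andbT negbK.
rewrite /exp_util; case: s @F hsupp => F hsupp.
-
  pose S : set R := [set` `[0, Lbar[].
  have mS : measurable S by exact: measurable_itv.
  have muS : F (~` S) = 0%E by rewrite probability_setC // hFL subee.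
  have viL : vi <= Lbar.
    rewrite leNgt; apply/negP => hlt.
    have := hsupp (vi - Lbar); rewrite subr_gt0 hlt => /(_ isT).
    rewrite (@subset_measure0 _ _ _ F (ball vi (vi - Lbar)) (~` S)) ?ltxx //.
    + exact: measurable_ball.
    + exact: measurableC.
    + move=> x; rewrite ball_itv /= in_itv /= => /andP[h1 _].
      rewrite /S /= in_itv /= => /andP[_ h2].
      by move: h1; rewrite opprB addrC subrK => /(lt_trans h2); rewrite ltxx.
  apply: (@iter_le _ n F S mS muS i vi _ _ _ hall) ; last first.
    by move=> k /hinit ->.
  move=> v hv.
  rewrite lee_fin; apply: fin_le => //; first exact: ltW.
  left => j; move: (hv j); case: (j == i) => [->|].
    exact: le_lt_trans viL Lr.
  by rewrite /S /= in_itv /= => /andP[_ h]; exact: lt_trans h Lr.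
-
  pose S : set R := [set` `[Hund, +oo[].
  have mS : measurable S by exact: measurable_itv.
  have muS : F (~` S) = 0%E by rewrite probability_setC // hFH subee.
  apply: (@iter_le _ n F S mS muS i vi _ _ _ hall) ; last first.
    by move=> k /hinit ->.
  move=> v hv.
  rewrite lee_fin; apply: fin_le => //; first exact: ltW.
  right.
  have [k0 [k0i a0]] : exists k0, k0 != i /\ alpha k0 = 1.
    case: (eqVneq j1 i) => [ej|ji]; last by exists j1.
    by exists k1; split => //; rewrite -ej eq_sym.
  exists k0; split => //; split => //.
  move: (hv k0); rewrite (negbTE k0i) /S /= in_itv /= andbT => h.
  exact: lt_le_trans rH' h.
Qed.
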